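(* Let $\mathbb{F}$ be a subfield of $\mathbb{R}$ and let $\vec v_1,\vec v_2,\vec v_3$ be an orthogonal basis of $\mathbb{F}^3$. Put $V_j:=\mathbb{F}\vec v_j\in\mathbb{P}^2(\mathbb{F})$, $V_{12}:=\mathbb{F}(\vec v_1-\vec v_2)$, $V_{23}:=\mathbb{F}(\vec v_2-\vec v_3)$, $V_{13}:=\mathbb{F}(\vec v_1-\vec v_3)$. Then $V_1\times V_2=V_3$, $V_2\times V_3=V_1$, $V_3\times V_1=V_2$, and for all $r,s\in\mathbb{F}$: \begin{enumerate} \item[a)] $\mathbb{F}(\vec v_1-rs\vec v_2)=V_3\times\big[\mathbb{F}(\vec v_3-r\vec v_2)\times\mathbb{F}(\vec v_1-s\vec v_3)\big]$; \item[b)] $\mathbb{F}(\vec v_1-s\vec v_3)=V_2\times\big[V_{23}\times\mathbb{F}(\vec v_1-s\vec v_2)\big]$; \item[c)] $\mathbb{F}(\vec v_3-r\vec v_2)=V_1\times\big[V_{13}\times\mathbb{F}(\vec v_1-r\vec v_2)\big]$; \item[d)] $\mathbb{F}(\vec v_1-(r-s)\vec v_2)=V_3\times\Big[\big([V_{23}\times\mathbb{F}(\vec v_1-r\vec v_2)]\times[V_2\times\mathbb{F}(\vec v_1-s\vec v_3)]\big)\times V_3\Big]$; \item[e)] $V_{13}=V_2\times(V_{12}\times V_{23})$; \item[f)] for $W\in\mathbb{P}^2(\mathbb{F})$, the expression $\imath(W):=(W\times V_3)\times\Big(\big((W\times V_3)\times V_3\big)\times V_2\Big)$ is defined precisely when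 $W=\mathbb{F}(\vec v_1-r\vec v_2+s\vec v_3)$ for some $s\in\mathbb{F}$ and a unique $r\in\mathbb{F}$, and in this case $\imath(W)=\mathbb{F}(\vec v_1-r\vec v_2)$. Moreover, if $W=\mathbb{F}(\vec v_1-r\vec v_2)$ then $\imath(W)=W$. \end{enumerate}
   Context: $\mathbb{P}^2(\mathbb{F})=\{\mathbb{F}\vec v:\vec 0\ne\vec v\in\mathbb{F}^3\}$ with $\mathbb{F}\vec v=\{\lambda\vec v:\lambda\in\mathbb{F}\}$. For distinct $\mathbb{F}\vec v,\mathbb{F}\vec w\in\mathbb{P}^2(\mathbb{F})$ the projective cross product is $\mathbb{F}\vec v\times\mathbb{F}\vec w:=\mathbb{F}(\vec v\times\vec w)$, where $\times$ is the usual cross product on $\mathbb{F}^3$; $\mathbb{F}\vec v\times\mathbb{F}\vec v$ is undefined, and an expression built from it is defined only if all its subexpressions are defined. All equalities in the claim are equalities of (defined) elements of $\mathbb{P}^2(\mathbb{F})$. *)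

(* Defs.v *)
From HB Require Import structures.
From mathcomp Require Import all_boot all_order all_algebra.
From mathcomp Require Import reals.
Set Implicit Arguments. Unset Strict Implicit. Unset Printing Implicit Defensive.
Import Order.TTheory GRing.Theory Num.Theory.
Local Open Scope ring_scope.

Section Proj.
Variable F : fieldType.

Definition c0 (u : 'rV[F]_3) : F := u ord0 (inord 0).
Definition c1 (u : 'rV[F]_3) : F := u ord0 (inord 1).
Definition c2 (u : 'rV[F]_3) : F := u ord0 (inord 2).

Definition dot3 (u v : 'rV[F]_3) : F := \sum_(i < 3) u ord0 i * v ord0 i.

Definition cross3 (u v : 'rV[F]_3) : 'rV[F]_3 :=
  \row_(i < 3)
    (if i == 0 :> nat then c1 u * c2 v - c2 u * c1 v
     else if i == 1 :> nat then c2 u * c0 v - c0 u * c2 v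
     else c0 u * c1 v - c1 u * c0 v).

(* Points of P^2(F) are the 1-dimensional subspaces of F^3.  Partially defined
   expressions are modelled with option: None = undefined. *)
Definition is_point (U : {vspace 'rV[F]_3}) : bool := \dim U == 1%N.

Definition pt (v : 'rV[F]_3) : option {vspace 'rV[F]_3} :=
  if v != 0 then Some <[v]>%VS else None.

(* projective cross product: defined only for two defined, distinct points;
   F v x F w := F (v x w), where v, w are (any) nonzero spanning vectors *)
Definition pcross (U W : option {vspace 'rV[F]_3}) : option {vspace 'rV[F]_3} :=
  match U, W with
  | Some U', Some W' =>
      if [&& is_point U', is_point W' & U' != W'] then pt (cross3 (vpick U') (vpick W'))
      else None
  | _, _ => None
  end.

End Proj.

(* Main.v *)
Require Import Defs.
From HB Require Import structures.
From mathcomp Require Import all_boot all_order all_algebra.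
From mathcomp Require Import reals ring.
Import Order.TTheory GRing.Theory Num.Theory.
Local Open Scope ring_scope.

Set Implicit Arguments. Unset Strict Implicit.

Section Basics.
Variable F : fieldType.
Implicit Types u w z : 'rV[F]_3.

Lemma row3P u w : c0 u = c0 w -> c1 u = c1 w -> c2 u = c2 w -> u = w.
Proof.
move=> h0 h1 h2; apply/rowP => i.
case: i => [[|[|[|//]]] Hi].
- have -> : Ordinal Hi = inord 0 by apply/val_inj; rewrite /= inordK.
  exact: h0.
- have -> : Ordinal Hi = inord 1 by apply/val_inj; rewrite /= inordK.
  exact: h1.
- have -> : Ordinal Hi = inord 2 by apply/val_inj; rewrite /= inordK.
  exact: h2.
Qed.

Lemma c0D u w : c0 (u + w) = c0 u + c0 w. Proof. by rewrite /c0 mxE. Qed.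
Lemma c1D u w : c1 (u + w) = c1 u + c1 w. Proof. by rewrite /c1 mxE. Qed.
Lemma c2D u w : c2 (u + w) = c2 u + c2 w. Proof. by rewrite /c2 mxE. Qed.
Lemma c0N u : c0 (- u) = - c0 u. Proof. by rewrite /c0 mxE. Qed.
Lemma c1N u : c1 (- u) = - c1 u. Proof. by rewrite /c1 mxE. Qed.
Lemma c2N u : c2 (- u) = - c2 u. Proof. by rewrite /c2 mxE. Qed.
Lemma c0Z k u : c0 (k *: u) = k * c0 u. Proof. by rewrite /c0 mxE. Qed.
Lemma c1Z k u : c1 (k *: u) = k * c1 u. Proof. by rewrite /c1 mxE. Qed.
Lemma c2Z k u : c2 (k *: u) = k * c2 u. Proof. by rewrite /c2 mxE. Qed.
Lemma c00 : c0 (0 : 'rV[F]_3) = 0. Proof. by rewrite /c0 mxE. Qed.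
Lemma c10 : c1 (0 : 'rV[F]_3) = 0. Proof. by rewrite /c1 mxE. Qed.
Lemma c20 : c2 (0 : 'rV[F]_3) = 0. Proof. by rewrite /c2 mxE. Qed.
Lemma c0X u w : c0 (cross3 u w) = c1 u * c2 w - c2 u * c1 w.
Proof. by rewrite /cross3 {1}/c0 mxE inordK. Qed.
Lemma c1X u w : c1 (cross3 u w) = c2 u * c0 w - c0 u * c2 w.
Proof. by rewrite /cross3 {1}/c1 mxE inordK. Qed.
Lemma c2X u w : c2 (cross3 u w) = c0 u * c1 w - c1 u * c0 w.
Proof. by rewrite /cross3 {1}/c2 mxE inordK. Qed.

Definition cE := (c0D, c1D, c2D, c0N, c1N, c2N, c0Z, c1Z, c2Z, c00, c10, c20,
  c0X, c1X, c2X).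

Lemma dot3E u w : dot3 u w = c0 u * c0 w + c1 u * c1 w + c2 u * c2 w.
Proof.
rewrite /dot3 !big_ord_recr big_ord0 /= add0r /c0 /c1 /c2.
congr (_ * _ + _ * _ + _ * _); congr (_ _ _); apply/val_inj; rewrite /= inordK //.
Qed.

Lemma crossDl u w z : cross3 (u + w) z = cross3 u z + cross3 w z.
Proof. apply: row3P; rewrite !cE; ring. Qed.
Lemma crossDr u w z : cross3 z (u + w) = cross3 z u + cross3 z w.
Proof. apply: row3P; rewrite !cE; ring. Qed.
Lemma crossZl k u z : cross3 (k *: u) z = k *: cross3 u z.
Proof. apply: row3P; rewrite !cE; ring. Qed.
Lemma crossZr k u z : cross3 z (k *: u) = k *: cross3 z u.
Proof. apply: row3P; rewrite !cE; ring. Qed.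
Lemma crossC u w : cross3 u w = - cross3 w u.
Proof. apply: row3P; rewrite !cE; ring. Qed.
Lemma crossvv u : cross3 u u = 0.
Proof. apply: row3P; rewrite !cE; ring. Qed.
Lemma cross0l u : cross3 0 u = 0.
Proof. apply: row3P; rewrite !cE; ring. Qed.
Lemma cross_triple u w z : cross3 z (cross3 u w) = dot3 z w *: u - dot3 z u *: w.
Proof. apply: row3P; rewrite !dot3E !cE; ring. Qed.

Lemma zero3 u : u = 0 <-> [/\ c0 u = 0, c1 u = 0 & c2 u = 0].
Proof.
split=> [->|[h0 h1 h2]]; first by rewrite !cE.
by apply: row3P; rewrite !cE.
Qed.

Lemma aux (x y p q : F) : x != 0 -> x * q = p * y -> q = y / x * p.
Proof. by move=> nz h; rewrite -(mulKf nz q) h; field. Qed.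

Lemma parallel u w : u != 0 -> cross3 u w = 0 -> exists k, w = k *: u.
Proof.
move=> u0 /zero3; rewrite !cE => -[/subr0_eq E0 /subr0_eq E1 /subr0_eq E2].
have : [\/ c0 u != 0, c1 u != 0 | c2 u != 0].
  case: (eqVneq (c0 u) 0) => a0; last by constructor 1.
  case: (eqVneq (c1 u) 0) => a1; last by constructor 2.
  case: (eqVneq (c2 u) 0) => a2; last by constructor 3.
  by case/eqP: u0; apply/zero3.
case=> nz; [exists (c0 w / c0 u)|exists (c1 w / c1 u)|exists (c2 w / c2 u)];
  apply: row3P; rewrite !cE; apply: aux => //;
  first [exact: E0|exact: E1|exact: E2|exact: (esym E0)|exact: (esym E1)
        |exact: (esym E2)|exact: mulrC].
Qed.

Lemma pt_scale k u : k != 0 -> pt (k *: u) = pt u.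
Proof.
move=> k0; rewrite /pt scaler_eq0 (negbTE k0) /=.
case: (eqVneq u 0) => //= u0; congr Some.
apply/eqP; rewrite eqEdim -memvE memvZ ?memv_line // !dim_vline scaler_eq0.
by rewrite (negbTE k0) u0.
Qed.

Lemma pt_line u w : u != 0 -> w \in <[u]>%VS -> w != 0 -> <[w]>%VS = <[u]>%VS.
Proof.
move=> u0 wu w0; apply/eqP; rewrite eqEdim -memvE wu !dim_vline u0 w0 //.
Qed.

Lemma pcross_pt u w : pcross (pt u) (pt w) = pt (cross3 u w).
Proof.
rewrite {1 2}/pt; case: (eqVneq u 0) => [->|u0]; first by rewrite cross0l /pt eqxx.
case: (eqVneq w 0) => [->|w0] /=.
  by rewrite crossC cross0l oppr0 /pt eqxx.
rewrite /is_point !dim_vline u0 w0 /=.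
have pu : vpick <[u]>%VS \in <[u]>%VS := memv_pick _.
have pw : vpick <[w]>%VS \in <[w]>%VS := memv_pick _.
have [k ek] := vlineP _ _ pu; have [l el] := vlineP _ _ pw.
have k0 : k != 0.
  apply: contraNneq (_ : vpick <[u]>%VS != 0) => [k0|].
    by rewrite ek k0 scale0r.
  by rewrite vpick0 -dimv_eq0 dim_vline u0.
have l0 : l != 0.
  apply: contraNneq (_ : vpick <[w]>%VS != 0) => [l0|].
    by rewrite el l0 scale0r.
  by rewrite vpick0 -dimv_eq0 dim_vline w0.
case: (eqVneq <[u]>%VS <[w]>%VS) => [E|ne] /=.
  have : w \in <[u]>%VS by rewrite E memv_line.
  case/vlineP=> m ->; rewrite crossZr crossvv scaler0 /pt eqxx //.
by rewrite ek el crossZl crossZr scalerA pt_scale // mulf_neq0.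
Qed.

Lemma pt_vpick (W : {vspace 'rV[F]_3}) : \dim W = 1%N ->
  vpick W != 0 /\ Some W = pt (vpick W).
Proof.
move=> d1; have p0 : vpick W != 0 by rewrite vpick0 -dimv_eq0 d1.
split=> //; rewrite /pt p0; congr Some; apply/eqP.
by rewrite eq_sym eqEdim -memvE memv_pick dim_vline p0 d1.
Qed.

Lemma pt_eq u w : u != 0 -> pt u = pt w -> exists k, w = k *: u.
Proof.
move=> u0; rewrite /pt u0; case: (eqVneq w 0) => // w0 /(congr1 (odflt 0%VS)) /= E.
by apply/vlineP; rewrite E memv_line.
Qed.

End Basics.

Section Main.
Variable F : fieldType.
Variables v1 v2 v3 : 'rV[F]_3.
Variables a b c : F.
Hypothesis ha : cross3 v1 v2 = a *: v3.
Hypothesis hb : cross3 v2 v3 = b *: v1.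
Hypothesis hc : cross3 v3 v1 = c *: v2.
Hypothesis a0 : a != 0.
Hypothesis b0 : b != 0.
Hypothesis c0' : c != 0.
Hypothesis indep : forall x y z : F, x *: v1 + y *: v2 + z *: v3 = 0 -> [/\ x = 0, y = 0 & z = 0].
Hypothesis spanv : forall w, exists x y z : F, w = x *: v1 + y *: v2 + z *: v3.

Definition comb (x y z : F) := x *: v1 + y *: v2 + z *: v3.

Lemma cross_comb x1 x2 x3 y1 y2 y3 :
  cross3 (comb x1 x2 x3) (comb y1 y2 y3) =
  comb (b * (x2 * y3 - x3 * y2)) (c * (x3 * y1 - x1 * y3)) (a * (x1 * y2 - x2 * y1)).
Proof.
rewrite /comb !crossDl !crossDr !crossZl !crossZr !crossvv !scaler0.
rewrite (crossC v2 v1) (crossC v3 v2) (crossC v1 v3) ha hb hc.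
apply: row3P; rewrite !cE; ring.
Qed.

Lemma e1 : v1 = comb 1 0 0.
Proof. by rewrite /comb !scale0r !addr0 scale1r. Qed.
Lemma e2 : v2 = comb 0 1 0.
Proof. by rewrite /comb !scale0r add0r addr0 scale1r. Qed.
Lemma e3 : v3 = comb 0 0 1.
Proof. by rewrite /comb !scale0r !add0r scale1r. Qed.
Lemma combD x1 x2 x3 y1 y2 y3 :
  comb x1 x2 x3 + comb y1 y2 y3 = comb (x1 + y1) (x2 + y2) (x3 + y3).
Proof. apply: row3P; rewrite !cE; ring. Qed.
Lemma combN x1 x2 x3 : - comb x1 x2 x3 = comb (- x1) (- x2) (- x3).
Proof. apply: row3P; rewrite !cE; ring. Qed.
Lemma combZ k x1 x2 x3 : k *: comb x1 x2 x3 = comb (k * x1) (k * x2) (k * x3).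
Proof. apply: row3P; rewrite !cE; ring. Qed.
Definition combE := (combD, combN, combZ).

Lemma comb_inj x1 x2 x3 y1 y2 y3 : comb x1 x2 x3 = comb y1 y2 y3 ->
  [/\ x1 = y1, x2 = y2 & x3 = y3].
Proof.
move=> /eqP; rewrite -subr_eq0 combN combD => /eqP E; have [h1 h2 h3] := indep E.
by move/eqP: h1; move/eqP: h2; move/eqP: h3; rewrite !subr_eq0 => /eqP -> /eqP -> /eqP ->.
Qed.

Lemma comb_neq0 x1 x2 x3 : x1 != 0 -> comb x1 x2 x3 != 0.
Proof. by move=> nz; apply/eqP => E; have [h _ _] := indep E; rewrite h eqxx in nz. Qed.

Lemma comb_neq1 x1 x2 x3 : x1 = 1 -> comb x1 x2 x3 != 0.
Proof. by move=> ->; apply: comb_neq0; rewrite oner_eq0. Qed.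

Lemma pt_comb k x1 x2 x3 y1 y2 y3 : k != 0 ->
  y1 = k * x1 -> y2 = k * x2 -> y3 = k * x3 ->
  pt (comb x1 x2 x3) = pt (comb y1 y2 y3).
Proof. by move=> k0 -> -> ->; rewrite -combZ pt_scale. Qed.

Lemma comb0 x1 x2 x3 : x1 = 0 -> x2 = 0 -> x3 = 0 -> pt (comb x1 x2 x3) = None.
Proof. by move=> -> -> ->; rewrite /comb !scale0r !addr0 /pt eqxx. Qed.

Lemma body :
  let V1 := pt v1 in let V2 := pt v2 in let V3 := pt v3 in
  let V12 := pt (v1 - v2) in let V23 := pt (v2 - v3) in let V13 := pt (v1 - v3) in
  let X := @pcross F in
  [/\ X V1 V2 = V3, X V2 V3 = V1, X V3 V1 = V2,
   (forall r s : F,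
     [/\ pt (v1 - (r * s) *: v2) = X V3 (X (pt (v3 - r *: v2)) (pt (v1 - s *: v3))),
         pt (v1 - s *: v3) = X V2 (X V23 (pt (v1 - s *: v2))),
         pt (v3 - r *: v2) = X V1 (X V13 (pt (v1 - r *: v2))),
         pt (v1 - (r - s) *: v2) =
           X V3 (X (X (X V23 (pt (v1 - r *: v2))) (X V2 (pt (v1 - s *: v3)))) V3)
       & V13 = X V2 (X V12 V23)]) &
   (forall W : {vspace 'rV[F]_3}, \dim W = 1%N ->
     let iW := X (X (Some W) V3) (X (X (X (Some W) V3) V3) V2) in
     [/\ iW <> None <-> (exists r s : F, Some W = pt (v1 - r *: v2 + s *: v3)),
         (forall r s r' s' : F, Some W = pt (v1 - r *: v2 + s *: v3) ->
            Some W = pt (v1 - r' *: v2 + s' *: v3) -> r = r'),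
         (forall r s : F, Some W = pt (v1 - r *: v2 + s *: v3) -> iW = pt (v1 - r *: v2))
       & (forall r : F, Some W = pt (v1 - r *: v2) -> iW = Some W)])].
Proof.
cbv zeta.
split.
- rewrite pcross_pt e1 e2 e3 cross_comb; symmetry; apply: (pt_comb (k:=a)) => //; ring.
- rewrite pcross_pt e1 e2 e3 cross_comb; symmetry; apply: (pt_comb (k:=b)) => //; ring.
- rewrite pcross_pt e1 e2 e3 cross_comb; symmetry; apply: (pt_comb (k:=c)) => //; ring.
- move=> r s; rewrite e1 e2 e3 !combE !pcross_pt !cross_comb; split.
  + apply: (pt_comb (k:=- (b * c))); rewrite ?oppr_eq0 ?mulf_neq0 //; ring.
  + apply: (pt_comb (k:=- (a * b))); rewrite ?oppr_eq0 ?mulf_neq0 //; ring.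
  + apply: (pt_comb (k:=- (a * c))); rewrite ?oppr_eq0 ?mulf_neq0 //; ring.
  + apply: (pt_comb (k:=a * b * c * (b * c))); rewrite ?mulf_neq0 //; ring.
  + apply: (pt_comb (k:=a * b)); rewrite ?mulf_neq0 //; ring.
move=> W dW.
have C3 : forall r s : F, Some W = pt (v1 - r *: v2 + s *: v3) ->
   pcross (pcross (Some W) (pt v3))
     (pcross (pcross (pcross (Some W) (pt v3)) (pt v3)) (pt v2)) = pt (v1 - r *: v2).
  move=> r s ->; rewrite e1 e2 e3 !combE !pcross_pt !cross_comb.
  symmetry; apply: (pt_comb (k:=a * b ^+ 2 * c ^+ 2)); rewrite ?mulf_neq0 ?expf_neq0 //; ring.
split.
- split.
  + have [w0 hw] := pt_vpick dW; have [x [y [z ew]]] := spanv (vpick W).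
    rewrite hw ew -/(comb x y z) e2 e3 !pcross_pt !cross_comb.
    case: (eqVneq x 0) => [x0|x0].
      by rewrite comb0 // x0; ring.
    move=> _; exists (- (y / x)), (z / x).
    rewrite e1 !combE; apply: (pt_comb (k:=x^-1)); rewrite ?invr_eq0 //; field => //.
  + move=> [r [s hs]]; rewrite (C3 r s hs) /pt.
    have : v1 - r *: v2 != 0 by rewrite e1 e2 !combE; apply: comb_neq1; ring.
    by move/negbTE=> ->.
- move=> r s r' s' h h'; rewrite h in h'.
  have u0 : v1 - r *: v2 + s *: v3 != 0.
    by rewrite e1 e2 e3 !combE; apply: comb_neq1; ring.
  have [k] := pt_eq u0 h'.
  rewrite e1 e2 e3 !combE => /comb_inj [k1 k2 _].
  move: k1 k2; rewrite !mulr0 !subr0 !sub0r !addr0 !mulr1 => <-; rewrite mul1r => /oppr_inj -> //.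
- exact: C3.
- move=> r hr; have := C3 r 0; rewrite scale0r addr0 => /(_ hr) ->.
  by rewrite hr.
Qed.
End Main.

Lemma dot3C (F : fieldType) (u w : 'rV[F]_3) : dot3 u w = dot3 w u.
Proof. rewrite !dot3E; ring. Qed.


Lemma orth_cross (F : fieldType) (u w z : 'rV[F]_3) : z != 0 -> u != 0 ->
  dot3 z u = 0 -> dot3 z w = 0 -> (forall m, w != m *: u) ->
  exists2 k, k != 0 & cross3 u w = k *: z.
Proof.
move=> z0 u0 hu hw hm.
have : cross3 z (cross3 u w) = 0 by rewrite cross_triple hu hw !scale0r subr0.
case/(parallel z0) => k ek; exists k => //.
apply/eqP => k0; move: ek; rewrite k0 scale0r => /(parallel u0) [m em].
by move: (hm m); rewrite em eqxx.
Qed.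

Theorem lemma8 (R : realType) (F : fieldType) (emb : {rmorphism F -> R})
  (v1 v2 v3 : 'rV[F]_3)
  (hbasis : basis_of fullv [:: v1; v2; v3])
  (h12 : dot3 v1 v2 = 0) (h23 : dot3 v2 v3 = 0) (h13 : dot3 v1 v3 = 0) :
  let V1 := pt v1 in let V2 := pt v2 in let V3 := pt v3 in
  let V12 := pt (v1 - v2) in let V23 := pt (v2 - v3) in let V13 := pt (v1 - v3) in
  let X := @pcross F in
  [/\ X V1 V2 = V3, X V2 V3 = V1, X V3 V1 = V2,
   (forall r s : F,
     [/\ pt (v1 - (r * s) *: v2) = X V3 (X (pt (v3 - r *: v2)) (pt (v1 - s *: v3))),
         pt (v1 - s *: v3) = X V2 (X V23 (pt (v1 - s *: v2))),
         pt (v3 - r *: v2) = X V1 (X V13 (pt (v1 - r *: v2))),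
         pt (v1 - (r - s) *: v2) =
           X V3 (X (X (X V23 (pt (v1 - r *: v2))) (X V2 (pt (v1 - s *: v3)))) V3)
       & V13 = X V2 (X V12 V23)]) &
   (forall W : {vspace 'rV[F]_3}, \dim W = 1%N ->
     let iW := X (X (Some W) V3) (X (X (X (Some W) V3) V3) V2) in
     [/\ iW <> None <-> (exists r s : F, Some W = pt (v1 - r *: v2 + s *: v3)),
         (forall r s r' s' : F, Some W = pt (v1 - r *: v2 + s *: v3) ->
            Some W = pt (v1 - r' *: v2 + s' *: v3) -> r = r'),
         (forall r s : F, Some W = pt (v1 - r *: v2 + s *: v3) -> iW = pt (v1 - r *: v2))
       & (forall r : F, Some W = pt (v1 - r *: v2) -> iW = Some W)])].
Proof.
have indep : forall x y z : F, x *: v1 + y *: v2 + z *: v3 = 0 -> [/\ x = 0, y = 0 & z = 0].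
  move=> x y z e.
  have /freeP H : free [tuple v1; v2; v3] := basis_free hbasis.
  have hs : \sum_(i < 3) (fun i : 'I_3 => nth 0 [:: x; y; z] i) i *: [tuple v1; v2; v3]`_i = 0.
    by rewrite !big_ord_recr big_ord0 /= add0r.
  have := H _ hs (Ordinal (isT : (0 < 3)%N)); have := H _ hs (Ordinal (isT : (1 < 3)%N)).
  have := H _ hs (Ordinal (isT : (2 < 3)%N)); rewrite /=.
  by [].
have spanv : forall w, exists x y z : F, w = x *: v1 + y *: v2 + z *: v3.
  move=> w; have /andP[/eqP Hs _] := hbasis.
  have wS : w \in span [tuple v1; v2; v3] by rewrite /= Hs memvf.
  have := coord_span wS; rewrite !big_ord_recr big_ord0 /= add0r => ->.
  by do 3 eexists.
have nz1 : v1 != 0.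
  apply/eqP => e; have E : 1 *: v1 + 0 *: v2 + 0 *: v3 = 0.
    by rewrite e !scale0r scaler0 !addr0.
  by have [/eqP] := indep _ _ _ E; rewrite oner_eq0.
have nz2 : v2 != 0.
  apply/eqP => e; have E : 0 *: v1 + 1 *: v2 + 0 *: v3 = 0.
    by rewrite e !scale0r scaler0 !addr0.
  by have [_ /eqP] := indep _ _ _ E; rewrite oner_eq0.
have nz3 : v3 != 0.
  apply/eqP => e; have E : 0 *: v1 + 0 *: v2 + 1 *: v3 = 0.
    by rewrite e !scale0r scaler0 !addr0.
  by have [_ _ /eqP] := indep _ _ _ E; rewrite oner_eq0.
have [a a0 ha] : exists2 a, a != 0 & cross3 v1 v2 = a *: v3.
  apply: orth_cross nz3 nz1 (etrans (dot3C _ _) h13) (etrans (dot3C _ _) h23) _.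
  move=> m; apply/eqP => e; have E : m *: v1 + (-1) *: v2 + 0 *: v3 = 0.
    by rewrite e scaleN1r scale0r addr0 subrr.
  by have [_ /eqP] := indep _ _ _ E; rewrite oppr_eq0 oner_eq0.
have [b b0 hb] : exists2 b, b != 0 & cross3 v2 v3 = b *: v1.
  apply: orth_cross nz1 nz2 h12 h13 _.
  move=> m; apply/eqP => e; have E : 0 *: v1 + m *: v2 + (-1) *: v3 = 0.
    by rewrite e scaleN1r scale0r add0r subrr.
  by have [_ _ /eqP] := indep _ _ _ E; rewrite oppr_eq0 oner_eq0.
have [c c0 hc] : exists2 c, c != 0 & cross3 v3 v1 = c *: v2.
  apply: orth_cross nz2 nz3 h23 (etrans (dot3C _ _) h12) _.
  move=> m; apply/eqP => e; have E : (-1) *: v1 + 0 *: v2 + m *: v3 = 0.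
    by rewrite e scaleN1r scale0r addr0 addNr.
  by have [/eqP] := indep _ _ _ E; rewrite oppr_eq0 oner_eq0.
exact: (body ha hb hc a0 b0 c0 indep spanv).
Qed.
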